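(* Let $G$ be a Lie group, let $\mathcal{X}$ and $\mathcal{Y}$ be linear vector fields on $G$ with flows $(\varphi_t)_{t\in\mathbb{R}}$ and $(\psi_t)_{t\in\mathbb{R}}$, and suppose $\mathcal{X}$ and $\mathcal{Y}$ are $\pi$-conjugated, i.e. there is an automorphism $\pi:G\to G$ with $\pi(\varphi_t(x))=\psi_t(\pi(x))$ and $\varphi_t(\pi^{-1}(x))=\pi^{-1}(\psi_t(x))$ for all $t\in\mathbb{R}$, $x\in G$. Let $h:G\to G$ be a (continuous) homomorphism, $K=\ker(h)$ and $S=\ker(h\circ\pi^{-1})$. Then the pair $(\mathcal{X},\pi_K)$ is observable if and only if the pair $(\mathcal{Y},\pi_S)$ is observable.
   Context: A vector field on a Lie group $G$ is linear if its flow $(\varphi_t)_{t\in\mathbb{R}}$ is a one-parameter subgroup of $\mathrm{Aut}(G)$. For a closed subgroup $K$ of $G$, $\pi_K:G\to G/K$ denotes the canonical projection, and a pair $(\mathcal{X},\pi_K)$ consists of a linear vector field $\mathcal{X}$ (flow $\varphi_t$) and this projection. The pair is observable at $x_1\in G$ if for every $x_2\in G\setminus\{x_1\}$ there is $t\ge0$ with $\pi_K(\varphi_t(x_1))\neq\pi_K(\varphi_t(x_2))$; it is observable if it is observable at every $x_1\in G$. *)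

(* Defs.v *)
From HB Require Import structures.
From mathcomp Require Import all_boot all_order all_algebra.
From mathcomp Require Import all_classical all_reals all_analysis.
Set Implicit Arguments. Unset Strict Implicit. Unset Printing Implicit Defensive.
Import Order.TTheory GRing.Theory Num.Theory numFieldNormedType.Exports.
Local Open Scope ring_scope.

(* A topological group structure on the carrier of a topological space G
   (stand-in for a Lie group: no smooth structure is available). *)
Record topgroup (G : topologicalType) := TopGroup {
  gmul : G -> G -> G;
  ginv : G -> G;
  gone : G;
  gmulA : forall x y z, gmul x (gmul y z) = gmul (gmul x y) z;
  gmul1 : forall x, gmul gone x = x;
  gmulV : forall x, gmul (ginv x) x = gone;
  gmul_cont : continuous (fun p : G * G => gmul p.1 p.2);
  ginv_cont : continuous ginv
}.

Definition is_hom (G : topologicalType) (g : topgroup G) (f : G -> G) : Prop :=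
  continuous f /\ forall x y, f (gmul g x y) = gmul g (f x) (f y).

Definition is_aut (G : topologicalType) (g : topgroup G) (f : G -> G) : Prop :=
  is_hom g f /\ exists f', is_hom g f' /\ cancel f f' /\ cancel f' f.

(* flow of a linear vector field: a (continuous) one-parameter subgroup of
   Aut(G), t |-> phi t *)
Definition linear_flow (R : realType) (G : topologicalType) (g : topgroup G)
  (phi : R -> G -> G) : Prop :=
  [/\ forall t, is_aut g (phi t),
      phi 0 = id,
      forall s t, phi (s + t) = phi s \o phi t
    & continuous (fun p : R * G => phi p.1 p.2)].

Definition ker (G : topologicalType) (g : topgroup G) (h : G -> G) : set G :=
  [set x | h x = gone g].

(* pi_K x = pi_K y  in G/K  (left cosets xK) *)
Definition same_coset (G : topologicalType) (g : topgroup G) (K : set G)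
  (x y : G) : Prop := K (gmul g (ginv g x) y).

Definition observable_at (R : realType) (G : topologicalType) (g : topgroup G)
  (phi : R -> G -> G) (K : set G) (x1 : G) : Prop :=
  forall x2, x2 <> x1 -> exists t : R, 0 <= t /\ ~ same_coset g K (phi t x1) (phi t x2).

Definition observable (R : realType) (G : topologicalType) (g : topgroup G)
  (phi : R -> G -> G) (K : set G) : Prop :=
  forall x1, observable_at g phi K x1.

(* Main.v *)
Require Import Defs.
From HB Require Import structures.
From mathcomp Require Import all_boot all_order all_algebra.
From mathcomp Require Import all_classical all_reals all_analysis.
Import Order.TTheory GRing.Theory Num.Theory numFieldNormedType.Exports.
Local Open Scope ring_scope.

Section GL.
Variables (G : topologicalType) (g : topgroup G).
Local Notation "x * y" := (gmul g x y).

Lemma cancel_l a x y : a * x = a * y -> x = y.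
Proof.
move=> H; rewrite -(gmul1 g x) -(gmul1 g y) -(gmulV g a) -!gmulA H //.
Qed.

Lemma mulgV' x : x * ginv g x = gone g.
Proof.
set y := x * ginv g x.
have yy : y * y = y.
  rewrite /y -(gmulA g x (ginv g x)) (gmulA g (ginv g x) x) gmulV gmul1 //.
have e : ginv g y * (y * y) = ginv g y * y by rewrite yy.
by rewrite gmulA gmulV gmul1 in e.
Qed.

Lemma mulg1' x : x * gone g = x.
Proof. by rewrite -(gmulV g x) gmulA mulgV' gmul1. Qed.

Lemma hom1 f : is_hom g f -> f (gone g) = gone g.
Proof.
case=> _ Hf; apply: (@cancel_l (f (gone g))).
by rewrite -Hf gmul1 mulg1'.
Qed.

Lemma homV f x : is_hom g f -> f (ginv g x) = ginv g (f x).
Proof.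
move=> hf; have := hf => -[_ Hf].
have e : f (ginv g x) * f x = gone g by rewrite -Hf gmulV hom1.
by rewrite -(mulg1' (f (ginv g x))) -(mulgV' (f x)) gmulA e gmul1.
Qed.
End GL.

Theorem proposition2p6 (R : realType) (G : topologicalType) (g : topgroup G)
  (phi psi : R -> G -> G) (pi pi_inv : G -> G) (h : G -> G) :
  linear_flow g phi -> linear_flow g psi ->
  is_aut g pi -> cancel pi pi_inv -> cancel pi_inv pi ->
  (forall t x, pi (phi t x) = psi t (pi x)) ->
  (forall t x, phi t (pi_inv x) = pi_inv (psi t x)) ->
  is_hom g h ->
  observable g phi (ker g h) <-> observable g psi (ker g (h \o pi_inv)).
Proof.
move=> _ _ [hpi _] c1 c2 E _ _.
have key : forall t x1 x2, same_coset g (ker g h) (phi t x1) (phi t x2) <->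
   same_coset g (ker g (h \o pi_inv)) (psi t (pi x1)) (psi t (pi x2)).
  move=> t x1 x2; rewrite /same_coset /ker /= -!E -(@homV _ g pi (phi t x1) hpi) -hpi.2 c1. exact: iff_refl.
split=> H x1.
- move=> x2 ne.
  have ne' : pi_inv x2 <> pi_inv x1 by move=> e; apply: ne; rewrite -(c2 x2) e c2.
  have [t [t0 nt]] := H (pi_inv x1) _ ne'.
  exists t; split => //; rewrite -(c2 x1) -(c2 x2) => Hs; apply: nt; exact: (proj2 (key _ _ _) Hs).
- move=> x2 ne.
  have ne' : pi x2 <> pi x1 by move=> e; apply: ne; rewrite -(c1 x2) e c1.
  have [t [t0 nt]] := H (pi x1) _ ne'.
  exists t; split => // Hs; apply: nt; exact: (proj1 (key _ _ _) Hs).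
Qed.
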